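(* Let $E_3^*$ be the greedy exponential-progression-free set defined in the context, and let $G_3^*$ be the set of positive integers $m$ such that $v_p(m)\in A_3^*$ for every prime $p\mid m$, where $A_3^*$ is the set of nonnegative integers with no digit $2$ in base $3$. Then an integer $k = p_1^{a_1}p_2^{a_2}\cdots p_n^{a_n}$ (with distinct primes $p_i$ and exponents $a_i\ge 1$) belongs to $E_3^*$ if and only if $\gcd(a_1,a_2,\dots,a_n)$ belongs to $G_3^*$.
   Context: An exponential progression is a triple $x, x^n, x^{n^2}$ with natural numbers $x, n > 1$. $E_3^*$ is constructed greedily: $1\in E_3^*$, and for $k=2,3,4,\dots$ in increasing order, $k$ is put into $E_3^*$ unless there are natural numbers $x,n>1$ with $x\in E_3^*$, $x^n\in E_3^*$ and $k = x^{n^2}$. (So $E_3^* = \{1,2,\dots,15,17,\dots,80,82,\dots\}$.) $G_3^*$ is (by Rankin) the greedy set of positive integers free of 3-term geometric progressions. *)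

(* Defs.v *)
From mathcomp Require Import all_boot.
Set Implicit Arguments. Unset Strict Implicit. Unset Printing Implicit Defensive.

(* Greedy construction of E_3^*, by course-of-values recursion with fuel.
   Eaux f k decides membership of k, correctly whenever f > k:
   1 is in; k >= 2 is in unless there are x, n >= 2 with x, x^n in the set
   and k = x^(n^2) (then necessarily x, n <= k, so the search is exhaustive;
   and x, x^n < k so the recursive calls are on earlier elements). *)
Fixpoint Eaux (fuel k : nat) : bool :=
  match fuel with
  | 0 => false
  | f.+1 =>
      (k == 1) ||
      ((1 < k) &&
       ~~ has (fun x => has (fun n =>
              [&& x ^ (n ^ 2) == k, Eaux f x & Eaux f (x ^ n)])
              (iota 2 k)) (iota 2 k))
  end.

Definition inE3 (k : nat) : bool := Eaux k.+1 k.

Definition inA3 (a : nat) : Prop := forall i, (a %/ 3 ^ i) %% 3 != 2.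

Definition inG3 (m : nat) : Prop :=
  0 < m /\ forall p, prime p -> p %| m -> inA3 (logn p m).

Definition gcd_exponents (k : nat) : nat :=
  \big[gcdn/0]_(p <- primes k) logn p k.

(* Main.v *)
Require Import Defs.
From mathcomp Require Import all_boot zify.
From Stdlib Require Import Classical.

Lemma inA3E a : inA3 a <-> a %% 3 != 2 /\ inA3 (a %/ 3).
Proof.
split.
- move=> H; split; first by have := H 0; rewrite expn0 divn1.
  move=> i; have := H i.+1; by rewrite expnS divnMA.
- move=> [H1 H2] [|i]; first by rewrite expn0 divn1.
  by rewrite expnS divnMA.
Qed.

Lemma inA3_0 : inA3 0.
Proof. by move=> i; rewrite div0n mod0n. Qed.

Lemma inA3_3 u r : r < 3 -> r != 2 -> inA3 u -> inA3 (3 * u + r).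
Proof.
move=> hr hr2 hu; apply/inA3E; split.
- have -> : (3 * u + r) %% 3 = r by lia. done.
- have -> : (3 * u + r) %/ 3 = u by lia. done.
Qed.

Lemma A3_ap c : forall b e, inA3 b -> inA3 e -> inA3 c -> b + e = 2 * c -> b = c /\ e = c.
Proof.
elim/ltn_ind: c => c IH b e hb he hc hs.
case: (posnP c) => [c0|cpos]; first by lia.
move/inA3E: hb => [rb hb]; move/inA3E: he => [re he]; move/inA3E: hc => [rc hc].
have [h1 h2] : b %% 3 = c %% 3 /\ e %% 3 = c %% 3 by lia.
have hs' : b %/ 3 + e %/ 3 = 2 * (c %/ 3) by lia.
have [] := IH (c %/ 3) ltac:(lia) _ _ hb he hc hs'.
lia.
Qed.

Fixpoint yz (f a : nat) : nat * nat :=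
  match f with
  | 0 => (0, 0)
  | f'.+1 =>
    let p := yz f' (a %/ 3) in
    if a %% 3 == 0 then (3 * p.1, 3 * p.2)
    else if a %% 3 == 1 then (3 * p.1 + 1, 3 * p.2 + 1)
    else (3 * p.1, 3 * p.2 + 1)
  end.

Lemma yz_spec f a : a <= f ->
  let y := (yz f a).1 in let z := (yz f a).2 in
  [/\ inA3 y, inA3 z, y + a = 2 * z, z <= a & (~ inA3 a -> z < a)].
Proof.
elim: f a => [|f IH] a ha /=.
- have -> : a = 0 by lia. split => //; try exact: inA3_0.
  by move=> h; exfalso; apply: h; exact: inA3_0.
- have ha' : a %/ 3 <= f by lia.
  have [hy hz hs hle hlt] := IH _ ha'.
  set y' := (yz f (a %/ 3)).1 in hy hz hs hle hlt *.
  set z' := (yz f (a %/ 3)).2 in hy hz hs hle hlt *.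
  case: ifP => [h0|h0]; [|case: ifP => [h1|h1]]; split => /=.
  all: try (apply: inA3_3 => //; fail).
  all: try (rewrite -[3 * _]addn0; apply: inA3_3 => //; fail).
  all: try lia.
  + move=> hna; have : ~ inA3 (a %/ 3).
      by move=> h; apply: hna; apply/inA3E; split => //; rewrite (eqP h0).
    move/hlt; lia.
  + move=> hna; have : ~ inA3 (a %/ 3).
      by move=> h; apply: hna; apply/inA3E; split => //; rewrite (eqP h1).
    move/hlt; lia.
Qed.

Definition mk (f : nat -> nat) (s : seq nat) := \prod_(p <- s) p ^ f p.

Lemma mk_gt0 f s : all prime s -> 0 < mk f s.
Proof.
elim: s => [|p s IH] /=; first by rewrite /mk big_nil.
case/andP => hp hs; rewrite /mk big_cons muln_gt0 expn_gt0 prime_gt0 //=.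
exact: IH.
Qed.

Lemma logn_mk f s q : uniq s -> all prime s ->
  logn q (mk f s) = if q \in s then f q else 0.
Proof.
elim: s => [|p s IH] /=; first by rewrite /mk big_nil logn1.
case/andP => hns hu /andP [hp hs].
have h1 : 0 < p ^ f p by rewrite expn_gt0 prime_gt0.
have h2 := @mk_gt0 f s hs.
rewrite /mk big_cons lognM // -/(mk f s) IH // lognX logn_prime // in_cons.
case: (eqVneq q p) => [->|hqp] /=; first by rewrite (negbTE hns); lia.
by rewrite muln0.
Qed.

Lemma logn_nonprime q m : ~~ prime q -> logn q m = 0.
Proof. by move=> h; rewrite /logn (negbTE h). Qed.

Lemma gcdexpX x m : 0 < m -> gcd_exponents (x ^ m) = m * gcd_exponents x.
Proof.
move=> hm; rewrite /gcd_exponents primesX //.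
elim: (primes x) => [|p s IH]; first by rewrite !big_nil muln0.
by rewrite !big_cons IH lognX muln_gcdr.
Qed.

Lemma gcdexp_dvd k p : p \in primes k -> gcd_exponents k %| logn p k.
Proof.
rewrite /gcd_exponents; elim: (primes k) => [|q s IH] //.
rewrite in_cons big_cons => /orP [/eqP ->|h]; first exact: dvdn_gcdl.
exact: dvdn_trans (dvdn_gcdr _ _) (IH h).
Qed.

Lemma gcdexp_gt0 k : 1 < k -> 0 < gcd_exponents k.
Proof.
move=> hk; have hp : pdiv k \in primes k.
  by rewrite mem_primes pdiv_prime // pdiv_dvd; lia.
have := @gcdexp_dvd k _ hp; have := hp; rewrite -logn_gt0.
case: (gcd_exponents k) => // ; rewrite dvd0n => h /eqP e; by rewrite e in h.
Qed.

Lemma root_exists k m : 0 < k -> 0 < m -> m %| gcd_exponents k ->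
  exists x, x ^ m = k.
Proof.
move=> hk hm hd.
exists (mk (fun p => logn p k %/ m) (primes k)).
have hall : all prime (primes k) by apply/allP => p; rewrite mem_primes => /andP [].
apply: eqn_from_log; first by rewrite expn_gt0 mk_gt0 // orbT.
  done.
move=> q /=; case: (boolP (prime q)) => hq; last by rewrite !logn_nonprime.
rewrite lognX logn_mk ?primes_uniq //.
case: ifP => hin; last first.
  apply/esym/eqP; move: hin; rewrite -logn_gt0; lia.
by rewrite mulnC divnK // (dvdn_trans hd) // (@gcdexp_dvd k q).
Qed.

Definition inG3' m := 0 < m /\ forall p, prime p -> inA3 (logn p m).

Lemma inG3E m : inG3 m <-> inG3' m.
Proof.
split => [[h1 h2]|[h1 h2]]; split => // p hp.
- case: (boolP (p %| m)) => hd; first exact: h2.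
  suff -> : logn p m = 0 by exact: inA3_0.
  by apply/eqP; rewrite -leqn0 leqNgt logn_gt0 mem_primes hp h1 hd.
- move=> _; exact: h2.
Qed.

Lemma pow_facts x n : 1 < x -> 1 < n -> x < x ^ n /\ x ^ n < x ^ (n ^ 2).
Proof.
move=> hx hn; split.
- by rewrite -{1}(expn1 x) ltn_exp2l.
- rewrite ltn_exp2l //; rewrite expnS expn1; nia.
Qed.

Lemma Eaux_stable f1 : forall f2 k, k < f1 -> k < f2 -> Eaux f1 k = Eaux f2 k.
Proof.
elim: f1 => [|f IH] [|f'] k //= h1 h2.
congr (_ || (_ && ~~ _)).
apply: eq_in_has => x; rewrite mem_iota => hxi.
apply: eq_in_has => n; rewrite mem_iota => hni.
case E: (x ^ (n ^ 2) == k) => //=.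
have [a b] := @pow_facts x n ltac:(lia) ltac:(lia).
move/eqP: E => E.
rewrite (IH f' x) ?(IH f' (x ^ n)) //; lia.
Qed.

Lemma inE3_spec k : 1 < k -> inE3 k = ~~ has (fun x => has (fun n =>
   [&& x ^ (n ^ 2) == k, inE3 x & inE3 (x ^ n)]) (iota 2 k)) (iota 2 k).
Proof.
move=> hk; rewrite /inE3 /=.
have -> : (k == 1) = false by apply/negbTE; lia.
rewrite hk /=; congr (~~ _).
apply: eq_in_has => x; rewrite mem_iota => hxi.
apply: eq_in_has => n; rewrite mem_iota => hni.
case E: (x ^ (n ^ 2) == k) => //=.
have [a b] := @pow_facts x n ltac:(lia) ltac:(lia).
move/eqP: E => E.
rewrite (Eaux_stable k x.+1 x) ?(Eaux_stable k (x ^ n).+1 (x ^ n)) //; lia.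
Qed.

Lemma no_ap e n : 1 < n -> inG3' e -> inG3' (e * n) -> inG3' (e * n ^ 2) -> False.
Proof.
move=> hn [he1 he2] [_ hn2] [_ hn3].
set p := pdiv n; have hp : prime p by exact: pdiv_prime.
have hd : 0 < logn p n by rewrite logn_gt0 mem_primes hp pdiv_dvd; lia.
have h1 := hn2 p hp; have h2 := hn3 p hp; have h0 := he2 p hp.
rewrite lognM // in h1; last by lia.
rewrite lognM ?expn_gt0 ?lognX // in h2; last by lia.
have [] := @A3_ap _ _ _ h0 h2 h1 ltac:(lia). lia.
Qed.

Lemma split_exists G : 0 < G -> ~ inG3' G ->
  exists e n, [/\ 1 < n, inG3' e, inG3' (e * n) & G = e * n ^ 2].
Proof.
move=> hG hn.
have [p [hp hpa]] : exists p, prime p /\ ~ inA3 (logn p G).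
  apply: NNPP => h; apply: hn; split => // p hp.
  apply: NNPP => h'; apply: h; by exists p.
set Y := fun a => (yz a a).1. set Z := fun a => (yz a a).2.
have spec a : [/\ inA3 (Y a), inA3 (Z a), Y a + a = 2 * Z a, Z a <= a & (~ inA3 a -> Z a < a)] := yz_spec a a (leqnn a).
have hall : all prime (primes G) by apply/allP => q; rewrite mem_primes => /andP [].
set e := mk (fun q => Y (logn q G)) (primes G).
set n := mk (fun q => Z (logn q G) - Y (logn q G)) (primes G).
have le0 : 0 < e by exact: mk_gt0.
have ln0 : 0 < n by exact: mk_gt0.
have logE q : prime q -> logn q e = Y (logn q G).
  move=> hq; rewrite logn_mk ?primes_uniq //; case: ifP => // hin.
  have -> : logn q G = 0 by move: hin; rewrite -logn_gt0; lia.
  by have [_ _ hs hl _] := spec 0; lia.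
have logN q : prime q -> logn q n = Z (logn q G) - Y (logn q G).
  move=> hq; rewrite logn_mk ?primes_uniq //; case: ifP => // hin.
  have -> : logn q G = 0 by move: hin; rewrite -logn_gt0; lia.
  by have [_ _ hs hl _] := spec 0; lia.
exists e, n; split.
- have [_ _ hs hle hlt] := spec (logn p G).
  have := hlt hpa => hlt'.
  have : 0 < logn p n by rewrite logN //; lia.
  rewrite logn_gt0 mem_primes => /and3P [_ _ hd].
  have := dvdn_leq ln0 hd; have := prime_gt1 hp; lia.
- split => // q hq; rewrite logE //; by have [] := spec (logn q G).
- split; first by rewrite muln_gt0 le0.
  move=> q hq; rewrite lognM // logE // logN //.
  have [hy hz hs hle _] := spec (logn q G); 
  by have -> : Y (logn q G) + (Z (logn q G) - Y (logn q G)) = Z (logn q G) by lia.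
- apply: eqn_from_log; first done.
  + by rewrite muln_gt0 le0 expn_gt0 ln0.
  move=> q /=; case: (boolP (prime q)) => hq; last by rewrite !logn_nonprime.
  rewrite (lognM q le0 (_ : 0 < n ^ 2)); last by rewrite expn_gt0 ln0.
  rewrite lognX logE // logN //.
  have [hy hz hs hle _] := spec (logn q G); 
  lia.
Qed.

Lemma main_aux k : 1 < k -> (inE3 k <-> inG3' (gcd_exponents k)).
Proof.
elim/ltn_ind: k => k IH hk.
rewrite inE3_spec //.
have hG := @gcdexp_gt0 k hk.
case: (classic (inG3' (gcd_exponents k))) => hg.
- split => // _; apply/negP => /hasP [x hx /hasP [n hn /and3P [/eqP E h1 h2]]].
  move: hx hn; rewrite !mem_iota => hx hn.
  have [a b] := @pow_facts x n ltac:(lia) ltac:(lia).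
  have g1 := (IH x ltac:(lia) ltac:(lia)).1 h1.
  have g2 := (IH (x ^ n) ltac:(lia) ltac:(lia)).1 h2.
  have hn0 : 0 < n by lia.
  have hn2 : 0 < n ^ 2 by rewrite expn_gt0 hn0.
  rewrite (@gcdexpX x n hn0) in g2.
  rewrite -E (@gcdexpX x (n ^ 2) hn2) in hg.
  apply: (@no_ap (gcd_exponents x) n); rewrite ?(mulnC (gcd_exponents x)) //; lia.
- split => // h; exfalso.
  have [e [n [hn he hen hG']]] := @split_exists _ hG hg.
  have hn0 : 0 < n by lia.
  have hn2 : 0 < n ^ 2 by rewrite expn_gt0 hn0.
  have [x hxk] : exists x, x ^ (n ^ 2) = k.
    apply: root_exists => //; first lia.
    by rewrite hG' dvdn_mull.
  have hx1 : 1 < x.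
    case: x hxk => [|[|x]] // hxk.
      by rewrite exp0n in hxk; lia.
    by rewrite exp1n in hxk; lia.
  have [a b] := @pow_facts x n hx1 hn.
  have gx : gcd_exponents x = e.
    have := hG'; rewrite -hxk (@gcdexpX x (n ^ 2) hn2).
    move=> h2; apply/eqP; rewrite -(eqn_pmul2r hn2).
    by rewrite mulnC h2.
  move/negP: h; apply; apply/hasP; exists x; first by rewrite mem_iota; lia.
  apply/hasP; exists n; first by rewrite mem_iota; have := ltn_expl n hx1; lia.
  apply/and3P; split; first by rewrite hxk.
  + apply/IH; try lia. by rewrite gx.
  + apply/IH; try lia. by rewrite (@gcdexpX x n hn0) gx mulnC.
Qed.

Theorem mainTheorem3 (k : nat) :
  1 < k -> (inE3 k <-> inG3 (gcd_exponents k)).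
Proof.
move=> hk; rewrite main_aux //; split; by move/inG3E.
Qed.
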